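(* Let $F$, $H$, $X$, $\Omega$, $Q$ and the sequences generated by the IneIREG method be as described in the context, and suppose $H$ is $\mu$-strongly monotone for some $\mu>0$. Suppose $(\eta_k)$ is nonincreasing; $0<\lambda_k<1/L_k$ for all $k\ge0$, where $L_k:=L_F+\eta_kL_H$; and $\alpha_0\in[0,1]$ and $\alpha_{k+1}\le(1-\beta_k)\alpha_k$ for all $k\ge0$, where $\beta_k:=\big(\frac{1}{1-\lambda_k^2L_k^2}+\frac{1}{2\lambda_k\eta_k\mu}\big)^{-1}$. Define $p_{-1}:=1$, $p_k:=\big(\prod_{i=0}^k(1-\beta_i)\big)^{-1}$ for $k\ge0$, and for $k\ge1$, $\Lambda_k:=\sum_{j=0}^{k-1}\lambda_j\eta_jp_j$, $\overline y_k:=\Lambda_k^{-1}\sum_{j=0}^{k-1}\lambda_j\eta_jp_jy_j$. Then for all $k\ge1$, $$0\le\mathrm{Gap}(\overline y_k,F,X)\le\frac{1}{2\Lambda_k}\Big(\eta_0D_X^2+\sum_{j=0}^{k-1}\eta_jp_{j-1}\delta_j+2\Big(\sum_{j=0}^{k-1}\lambda_j\eta_j^2p_j\Big)C_HD_X\Big).$$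
   Context: Work in $\mathbb{R}^n$ with Euclidean inner product $\langle\cdot,\cdot\rangle$ and norm $\|\cdot\|$. The maps $F\colon \mathrm{Dom}\,F\to\mathbb{R}^n$ and $H\colon\mathrm{Dom}\,H\to\mathbb{R}^n$ are monotone and Lipschitz continuous with constants $L_F>0$ and $L_H>0$; $H$ is $\mu$-strongly monotone means $\langle H(x)-H(y),x-y\rangle\ge\mu\|x-y\|^2$ for all $x,y\in\mathrm{Dom}\,H$. $X$ is a nonempty compact convex set and $\Omega$ a nonempty closed convex set with $X\subset\Omega\subset\mathrm{Dom}\,F\cap\mathrm{Dom}\,H$; $P_X,P_\Omega$ denote orthogonal projections. $Q:=\{x\in X:\langle F(x),y-x\rangle\ge0\ \forall y\in X\}$ is assumed nonempty. $D_X:=\sup_{x,y\in X}\|x-y\|$, $C_H:=\sup_{x\in X}\|H(x)\|$. $\mathrm{Gap}(z,F,X):=\sup_{x\in X}\langle F(x),z-x\rangle$. IneIREG method: start with $x_0=x_{-1}\in X$; for $k=0,1,\dots$, with parameters $\alpha_k\ge0$, $\lambda_k>0$, $\eta_k>0$, set $w_k=x_k+\alpha_k(x_k-x_{k-1})$, $w'_k=P_\Omega(w_k)$, $y_k=P_X\big(w_k-\lambda_k(F(w'_k)+\eta_kH(w'_k))\big)$, $x_{k+1}=P_X\big(w_k-\lambda_k(F(y_k)+\eta_kH(y_k))\big)$. Also $\delta_k:=\alpha_k(1+\alpha_k)\|x_k-x_{k-1}\|^2$ for $k\ge0$. *)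

(* Defs.v *)
From HB Require Import structures.
From mathcomp Require Import all_boot all_order all_algebra.
From mathcomp Require Import all_classical all_reals all_analysis.
Set Implicit Arguments. Unset Strict Implicit. Unset Printing Implicit Defensive.
Import Order.TTheory GRing.Theory Num.Theory.
Import numFieldNormedType.Exports.
Local Open Scope classical_set_scope.
Local Open Scope ring_scope.

Section Defs.
Variables (R : realType) (n : nat).
Notation V := 'rV[R]_n.

Definition dotp (u v : V) : R := \sum_(i < n) u ord0 i * v ord0 i.
Definition enorm (u : V) : R := Num.sqrt (dotp u u).

Definition convex_setE (A : set V) : Prop :=
  forall x y t, A x -> A y -> 0 <= t -> t <= 1 -> A (t *: x + (1 - t) *: y).

Definition is_proj (C : set V) (P : V -> V) : Prop :=
  forall x, C (P x) /\ forall y, C y -> enorm (x - P x) <= enorm (x - y).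

Definition op_monotone_on (D : set V) (G : V -> V) : Prop :=
  forall x y, D x -> D y -> 0 <= dotp (G x - G y) (x - y).

Definition op_strongly_monotone_on (D : set V) (G : V -> V) (mu : R) : Prop :=
  forall x y, D x -> D y -> mu * enorm (x - y) ^+ 2 <= dotp (G x - G y) (x - y).

Definition op_lipschitz_on (D : set V) (G : V -> V) (L : R) : Prop :=
  forall x y, D x -> D y -> enorm (G x - G y) <= L * enorm (x - y).

Definition diam (X : set V) : R :=
  sup [set r | exists x y, X x /\ X y /\ r = enorm (x - y)].

Definition supnorm (X : set V) (H : V -> V) : R :=
  sup [set r | exists x, X x /\ r = enorm (H x)].

Definition Gap (z : V) (F : V -> V) (X : set V) : R :=
  sup [set r | exists x, X x /\ r = dotp (F x) (z - x)].

Definition VIsol (F : V -> V) (X : set V) : set V :=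
  [set x | X x /\ forall y, X y -> 0 <= dotp (F x) (y - x)].
End Defs.

(* Main.v *)
Require Import Defs.
From HB Require Import structures.
From mathcomp Require Import all_boot all_order all_algebra.
From mathcomp Require Import all_classical all_reals all_analysis.
From mathcomp Require Import ring lra.
Import Order.TTheory GRing.Theory Num.Theory.
Import numFieldNormedType.Exports.
Local Open Scope classical_set_scope.
Local Open Scope ring_scope.

Set Implicit Arguments. Unset Strict Implicit.

Section Aux.
Variables (R : realType) (n : nat).
Notation V := 'rV[R]_n.
Implicit Types (u v w : V).

Lemma dotpC u v : dotp u v = dotp v u.
Proof. by apply: eq_bigr => i _; rewrite mulrC. Qed.
Lemma dotpDl u v w : dotp (u + v) w = dotp u w + dotp v w.
Proof. by rewrite /dotp -big_split; apply: eq_bigr => i _; rewrite mxE mulrDl. Qed.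
Lemma dotpDr u v w : dotp w (u + v) = dotp w u + dotp w v.
Proof. by rewrite dotpC dotpDl !(dotpC w). Qed.
Lemma dotpNl u v : dotp (- u) v = - dotp u v.
Proof. by rewrite /dotp -sumrN; apply: eq_bigr => i _; rewrite mxE mulNr. Qed.
Lemma dotpNr u v : dotp u (- v) = - dotp u v.
Proof. by rewrite dotpC dotpNl dotpC. Qed.
Lemma dotpZl (a : R) u v : dotp (a *: u) v = a * dotp u v.
Proof. by rewrite /dotp mulr_sumr; apply: eq_bigr => i _; rewrite mxE mulrA. Qed.
Lemma dotpZr (a : R) u v : dotp u (a *: v) = a * dotp u v.
Proof. by rewrite dotpC dotpZl dotpC. Qed.
Lemma dotp_ge0 u : 0 <= dotp u u.
Proof. by apply: sumr_ge0 => i _; rewrite -expr2 sqr_ge0. Qed.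
Lemma enorm_ge0 u : 0 <= enorm u.
Proof. exact: sqrtr_ge0. Qed.
Lemma enorm_sq u : enorm u ^+ 2 = dotp u u.
Proof. by rewrite /enorm sqr_sqrtr // dotp_ge0. Qed.
Lemma dotp0r u : dotp u 0 = 0.
Proof. by rewrite /dotp big1 // => i _; rewrite mxE mulr0. Qed.

Lemma dotp_eq0 v : dotp v v = 0 -> v = 0.
Proof.
move=> /eqP; rewrite /dotp psumr_eq0; last by move=> i _; rewrite -expr2 sqr_ge0.
move=> /allP H; apply/rowP => i; rewrite !mxE.
have := H i (mem_index_enum i); rewrite /= -expr2 sqrf_eq0 => /eqP.
by rewrite (ord1 ord0).
Qed.

Lemma CS_sq u v : dotp u v ^+ 2 <= dotp u u * dotp v v.
Proof.
have [v0|vpos] := eqVneq (dotp v v) 0.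
  by move/dotp_eq0: v0 => ->; rewrite !dotp0r mulr0 expr0n.
have hv : 0 < dotp v v by rewrite lt_def vpos dotp_ge0.
have := dotp_ge0 (dotp v v *: u - dotp u v *: v).
rewrite !(dotpDl, dotpDr, dotpNl, dotpNr, dotpZl, dotpZr) (dotpC v u) => h.
have : 0 <= dotp v v * (dotp u u * dotp v v - dotp u v ^+ 2) by lra.
by rewrite pmulr_rge0 // subr_ge0.
Qed.

Lemma CS u v : dotp u v <= enorm u * enorm v.
Proof.
have := CS_sq u v; rewrite -!enorm_sq => h.
have h1 := enorm_ge0 u; have h2 := enorm_ge0 v.
have hab := mulr_ge0 h1 h2.
case: (lerP (dotp u v) 0) => hd; first exact: le_trans hd hab.
by rewrite -(@ler_pXn2r _ 2) // ?nnegrE ?(ltW hd) // exprMn.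
Qed.

Lemma enormD u v : enorm (u + v) <= enorm u + enorm v.
Proof.
have h := CS u v; have h1 := enorm_ge0 u; have h2 := enorm_ge0 v.
have h3 := enorm_ge0 (u + v).
have : enorm (u + v) ^+ 2 <= (enorm u + enorm v) ^+ 2.
  rewrite !enorm_sq !(dotpDl, dotpDr) (dotpC v u) sqrrD !enorm_sq; lra.
nra.
Qed.

Lemma enormZ (a : R) u : enorm (a *: u) = `|a| * enorm u.
Proof. by rewrite /enorm dotpZl dotpZr mulrA -expr2 sqrtrM ?sqr_ge0 // sqrtr_sqr. Qed.

Lemma enorm_le u v : enorm u <= enorm v -> dotp u u <= dotp v v.
Proof. by move=> h; rewrite -!enorm_sq ler_pXn2r // ?nnegrE enorm_ge0. Qed.

Lemma sqD u v : dotp (u + v) (u + v) = dotp u u + 2 * dotp u v + dotp v v.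
Proof. rewrite !(dotpDl, dotpDr) (dotpC v u); ring. Qed.
Lemma sqB u v : dotp (u - v) (u - v) = dotp u u - 2 * dotp u v + dotp v v.
Proof. rewrite !(dotpDl, dotpDr, dotpNl, dotpNr) (dotpC v u); ring. Qed.
Lemma sqDZ u v (t : R) : dotp (u + t *: v) (u + t *: v) = dotp u u + 2 * t * dotp u v + t * t * dotp v v.
Proof. rewrite !(dotpDl, dotpDr, dotpZl, dotpZr) (dotpC v u); ring. Qed.
End Aux.

Section Aux2.
Variables (R : realType) (n : nat).
Notation V := 'rV[R]_n.
Implicit Types (u v w : V).

Lemma proj_vi (C : set V) P : convex_setE C -> is_proj C P ->
  forall z y, C y -> dotp (z - P z) (y - P z) <= 0.
Proof.
move=> cvx prj z y Cy.
have [Cp Hp] := prj z.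
set p := P z in Cp Hp *.
set s := dotp (z - p) (y - p).
set E := dotp (y - p) (y - p).
have key : forall t, 0 < t -> t <= 1 -> t * (2 * s) <= t * t * E.
  move=> t t0 t1.
  have Cq := cvx y p t Cy Cp (ltW t0) t1.
  have := enorm_le (Hp _ Cq).
  have -> : z - (t *: y + (1 - t) *: p) = (z - p) + (- t) *: (y - p).
    by apply/rowP => i; rewrite !mxE; ring.
  rewrite sqDZ -/s -/E; nra.
rewrite leNgt; apply/negP => s0.
have E0 : 0 <= E by exact: dotp_ge0.
have K0 : 0 < s + E by lra.
set t := s / (s + E).
have t0 : 0 < t by rewrite divr_gt0.
have t1 : t <= 1 by rewrite ler_pdivrMr // mul1r; lra.
have tK : t * (s + E) = s by rewrite /t mulfVK // gt_eqF.
have := key t t0 t1.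
have h2 : 0 < s * s by rewrite mulr_gt0.
nra.
Qed.

Lemma sq_le_aux u v : 0 <= dotp u v -> dotp v v <= dotp (u + v) (u + v).
Proof. rewrite sqD => h; have := dotp_ge0 u; lra. Qed.

Lemma proj_nonexp (C : set V) P : convex_setE C -> is_proj C P ->
  forall z y, C y -> dotp (P z - y) (P z - y) <= dotp (z - y) (z - y).
Proof.
move=> cvx prj z y Cy.
have h := proj_vi cvx prj z Cy.
have -> : z - y = (z - P z) + (P z - y) by apply/rowP => i; rewrite !mxE; ring.
have e : y - P z = - (P z - y) by apply/rowP => i; rewrite !mxE; ring.
rewrite e dotpNr oppr_le0 in h.
exact: sq_le_aux.
Qed.

End Aux2.

Section Aux3.
Variables (R : realType) (n : nat).
Notation V := 'rV[R]_n.
Implicit Types (u v w : V).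

Lemma step_core (w z y x' Gy Gw : V) (lam c : R) :
 dotp (w - lam *: Gy - x') (z - x') <= 0 ->
 dotp (w - lam *: Gw - y) (x' - y) <= 0 ->
 2 * lam * dotp (Gw - Gy) (x' - y) <= c * dotp (w - y) (w - y) + dotp (x' - y) (x' - y) ->
 dotp (x' - z) (x' - z) <= dotp (w - z) (w - z) - (1 - c) * dotp (w - y) (w - y)
    - 2 * lam * dotp Gy (y - z).
Proof.
rewrite !(dotpDl, dotpDr, dotpNl, dotpNr, dotpZl, dotpZr).
rewrite ?(dotpC z w) ?(dotpC y w) ?(dotpC x' w) ?(dotpC Gy w) ?(dotpC Gw w).
rewrite ?(dotpC y z) ?(dotpC x' z) ?(dotpC Gy z) ?(dotpC Gw z).
rewrite ?(dotpC x' y) ?(dotpC Gy y) ?(dotpC Gw y).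
rewrite ?(dotpC Gy x') ?(dotpC Gw x') ?(dotpC Gw Gy).
nra.
Qed.

End Aux3.

Section Aux4.
Variables (R : realType) (n : nat).
Notation V := 'rV[R]_n.
Implicit Types (u v w : V).

Lemma lip_core (g v : V) (lam L e E : R) : 0 <= lam -> 0 <= L -> 0 <= e ->
  enorm g <= L * e -> e ^+ 2 <= E ->
  2 * lam * dotp g v <= lam ^+ 2 * L ^+ 2 * E + dotp v v.
Proof.
move=> l0 L0 e0 hg hE.
have h1 := CS g v; have h2 := enorm_ge0 v; have h3 := enorm_ge0 g.
rewrite -(enorm_sq v).
have h4 : enorm g * enorm v <= L * e * enorm v by rewrite ler_wpM2r.
have h5 : 2 * lam * dotp g v <= 2 * lam * (L * e * enorm v).
  by rewrite ler_wpM2l ?mulr_ge0 //; exact: le_trans h1 h4.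
have h6 : 0 <= (lam * L * e - enorm v) ^+ 2 by exact: sqr_ge0.
have h7 : lam ^+ 2 * L ^+ 2 * e ^+ 2 <= lam ^+ 2 * L ^+ 2 * E.
  by rewrite ler_wpM2l // mulr_ge0 // sqr_ge0.
nra.
Qed.

Lemma mono_core (Fy Fz Hy Hz y z : V) (eta mu CD : R) : 0 <= eta ->
  0 <= dotp (Fy - Fz) (y - z) ->
  mu * dotp (y - z) (y - z) <= dotp (Hy - Hz) (y - z) ->
  - CD <= dotp Hz (y - z) ->
  dotp Fz (y - z) + eta * mu * dotp (y - z) (y - z) - eta * CD
    <= dotp (Fy + eta *: Hy) (y - z).
Proof.
move=> e0; move: (y - z) => r; rewrite !(dotpDl, dotpNl, dotpZl).
set a := dotp Fy _; set b := dotp Fz _; set c := dotp Hy _; set d := dotp Hz _.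
set s := dotp r r.
move=> h1 h2 h3.
have h4 : eta * (mu * s) <= eta * (c - d) by rewrite ler_wpM2l.
have h5 : eta * (- CD) <= eta * d by rewrite ler_wpM2l.
nra.
Qed.

Lemma beta_core (u v : V) (a b : R) : 0 < a -> 0 < b ->
  (a^-1 + b^-1)^-1 * dotp (u + v) (u + v) <= a * dotp u u + b * dotp v v.
Proof.
move=> a0 b0.
have hab : 0 < a + b by lra.
have hb : (a^-1 + b^-1)^-1 = a * b / (a + b).
  by field; rewrite ?gt_eqF //; lra.
rewrite hb sqD.
have := dotp_ge0 (a *: u + (- b) *: v).
rewrite sqDZ !(dotpZl, dotpZr) => h.
rewrite -(ler_pM2r hab).
have -> : a * b / (a + b) * (dotp u u + 2 * dotp u v + dotp v v) * (a + b)
  = a * b * (dotp u u + 2 * dotp u v + dotp v v).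
  by field; rewrite gt_eqF.
nra.
Qed.

Lemma inert_id (u v : V) (a : R) :
  dotp ((1 + a) *: u - a *: v) ((1 + a) *: u - a *: v) =
  (1 + a) * dotp u u - a * dotp v v + a * (1 + a) * dotp (u - v) (u - v).
Proof.
rewrite !(dotpDl, dotpDr, dotpNl, dotpNr, dotpZl, dotpZr) (dotpC v u); ring.
Qed.

Lemma enormN u : enorm (- u) = enorm u.
Proof. by rewrite /enorm dotpNl dotpNr opprK. Qed.

Lemma sqrt_le1 (t : R) : 0 <= t -> Num.sqrt t <= t + 1.
Proof.
move=> t0; rewrite -(@ler_pXn2r _ 2) ?nnegrE ?sqrtr_ge0 //; last by lra.
rewrite sqr_sqrtr //; nra.
Qed.

Lemma compact_enorm_bounded (X : set V) : compact X ->
  exists B, forall v, X v -> enorm v <= B.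
Proof.
move=> /compact_bounded [M [_ HM]].
have hlt : M < M + 1 by rewrite ltrDl.
have HM1 := HM (M + 1) hlt.
exists (n%:R * (M + 1) ^+ 2 + 1) => v Xv.
have hv := HM1 v Xv.
have hi : forall i, `|v ord0 i| <= M + 1.
  move=> i; apply: le_trans hv.
  by rewrite [leRHS]/Num.norm /= mx_normrE; apply/bigmax_geP; right; exists (ord0, i).
have hd : dotp v v <= n%:R * (M + 1) ^+ 2.
  rewrite /dotp -[n in n%:R]card_ord -sum1_card natr_sum mulr_suml.
  apply: ler_sum => i _; rewrite mul1r -expr2 -real_normK ?num_real //.
  by rewrite ler_pXn2r ?nnegrE ?normr_ge0 //; apply: le_trans (hi i).
apply: le_trans (sqrt_le1 (dotp_ge0 v)) _; lra.
Qed.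

End Aux4.

Section Aux5.
Variables (R : realType) (n : nat).
Notation V := 'rV[R]_n.
Implicit Types (u v w : V).

Lemma diam_ub (X : set V) a b : compact X -> X a -> X b -> enorm (a - b) <= diam X.
Proof.
move=> /compact_enorm_bounded [B hB] Xa Xb.
apply: sup_upper_bound; last by exists a, b.
split; first by exists (enorm (a - b)), a, b.
exists (B + B) => r [x [y [Xx [Xy ->]]]].
apply: le_trans (enormD _ _) _; rewrite enormN.
by apply: lerD; apply: hB.
Qed.

Lemma supnorm_ub (X D : set V) (H : V -> V) (L : R) a : compact X -> X `<=` D ->
  op_lipschitz_on D H L -> 0 <= L -> X a -> enorm (H a) <= supnorm X H.
Proof.
move=> /compact_enorm_bounded [B hB] XD hL L0 Xa.
apply: sup_upper_bound; last by exists a.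
split; first by exists (enorm (H a)), a.
exists (enorm (H a) + L * (B + B)) => r [x [Xx ->]].
have -> : H x = H a + (H x - H a) by rewrite addrC subrK.
apply: le_trans (enormD _ _) _; rewrite lerD2l.
apply: le_trans (hL _ _ (XD _ Xx) (XD _ Xa)) _.
rewrite ler_wpM2l //; apply: le_trans (enormD _ _) _; rewrite enormN.
by apply: lerD; apply: hB.
Qed.

Lemma gap_ge0 (X : set V) (F : V -> V) z z0 : X z0 -> 0 <= dotp (F z0) (z - z0) ->
  0 <= Gap z F X.
Proof.
move=> Xz0 h.
have [hs|hs] := pselect (has_sup [set r | exists x, X x /\ r = dotp (F x) (z - x)]).
  by apply: le_trans h _; apply: sup_upper_bound => //; exists z0.
by rewrite /Gap sup_out.
Qed.

Lemma gap_le (X : set V) (F : V -> V) z b : X !=set0 ->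
  (forall x, X x -> dotp (F x) (z - x) <= b) -> Gap z F X <= b.
Proof.
move=> [x0 X0] h; apply: ge_sup.
  by exists (dotp (F x0) (z - x0)), x0.
by move=> r [x [Xx ->]]; apply: h.
Qed.

End Aux5.

Section Aux6.
Variables (R : realType) (n : nat).
Notation V := 'rV[R]_n.
Implicit Types (u v w : V).

Lemma dotp_sumr (a : V) k (v : 'I_k -> V) :
  dotp a (\sum_(j < k) v j) = \sum_(j < k) dotp a (v j).
Proof.
rewrite /dotp; under eq_bigr do rewrite summxE mulr_sumr.
exact: exchange_big.
Qed.

Lemma dotp_comb (a z : V) (c : nat -> R) (y : nat -> V) k :
  \sum_(j < k) c j != 0 ->
  dotp a ((\sum_(j < k) c j)^-1 *: \sum_(j < k) c j *: y j - z)
  = (\sum_(j < k) c j)^-1 * \sum_(j < k) c j * dotp a (y j - z).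
Proof.
move=> hL.
rewrite dotpDr dotpNr dotpZr dotp_sumr.
have -> : \sum_(j < k) c j * dotp a (y j - z)
   = \sum_(j < k) dotp a (c j *: y j) - (\sum_(j < k) c j) * dotp a z.
  rewrite mulr_suml -sumrB; apply: eq_bigr => j _.
  by rewrite dotpDr dotpNr dotpZr; ring.
by rewrite mulrBr mulrA mulVf // mul1r.
Qed.

End Aux6.

Unset Implicit Arguments. Set Strict Implicit.

Theorem proposition4p7 (R : realType) (n : nat)
  (F H : 'rV[R]_n -> 'rV[R]_n) (DomF DomH X Omega : set 'rV[R]_n)
  (LF LH mu : R) (PX POmega : 'rV[R]_n -> 'rV[R]_n)
  (alpha lambda eta : nat -> R)
  (x w w' y : nat -> 'rV[R]_n) :
  (* standing assumptions *)
  0 < LF -> 0 < LH ->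
  op_monotone_on DomF F -> op_monotone_on DomH H ->
  op_lipschitz_on DomF F LF -> op_lipschitz_on DomH H LH ->
  X !=set0 -> compact X -> convex_setE X ->
  Omega !=set0 -> closed Omega -> convex_setE Omega ->
  X `<=` Omega -> Omega `<=` DomF `&` DomH ->
  is_proj X PX -> is_proj Omega POmega ->
  VIsol F X !=set0 ->
  (* strong monotonicity of H *)
  0 < mu -> op_strongly_monotone_on DomH H mu ->
  (* IneIREG iterates, with x_{-1} = x_0 (encoded by x (k.-1) at k = 0) *)
  X (x 0%N) ->
  (forall k, 0 <= alpha k) -> (forall k, 0 < lambda k) -> (forall k, 0 < eta k) ->
  (forall k, w k = x k + alpha k *: (x k - x k.-1)) ->
  (forall k, w' k = POmega (w k)) ->
  (forall k, y k = PX (w k - lambda k *: (F (w' k) + eta k *: H (w' k)))) ->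
  (forall k, x k.+1 = PX (w k - lambda k *: (F (y k) + eta k *: H (y k)))) ->
  (* parameter conditions *)
  (forall k, eta k.+1 <= eta k) ->
  (forall k, lambda k < 1 / (LF + eta k * LH)) ->
  0 <= alpha 0%N <= 1 ->
  let Lk k := LF + eta k * LH in
  let beta k := ((1 - lambda k ^+ 2 * Lk k ^+ 2)^-1
                 + (2 * lambda k * eta k * mu)^-1)^-1 in
  (forall k, alpha k.+1 <= (1 - beta k) * alpha k) ->
  (* pp m = (prod_{i<m} (1 - beta i))^-1, so p_j = pp j.+1 and p_{j-1} = pp j *)
  let pp (m : nat) := (\prod_(i < m) (1 - beta i))^-1 in
  let delta k := alpha k * (1 + alpha k) * enorm (x k - x k.-1) ^+ 2 in
  forall k : nat, (1 <= k)%N ->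
  let Lam := \sum_(j < k) lambda j * eta j * pp j.+1 in
  let ybar := Lam^-1 *: \sum_(j < k) (lambda j * eta j * pp j.+1) *: y j in
  0 <= Gap ybar F X /\
  Gap ybar F X <= (2 * Lam)^-1 *
    (eta 0%N * diam X ^+ 2 + \sum_(j < k) eta j * pp j * delta j
     + 2 * (\sum_(j < k) lambda j * eta j ^+ 2 * pp j.+1) * supnorm X H * diam X).
Proof.
move=> LF0 LH0 monF monH lipF lipH Xne Xc Xcvx Omne Omcl Omcvx XO OD prjX prjO
  sol mu0 smH X0 al0 lam0 eta0 hw hw' hy hx etadec lamlt al01 Lk beta albeta
  pp delta k k1 Lam ybar.
set C := supnorm X H. set D := diam X.
have XDF : forall v, X v -> DomF v by move=> v /XO /OD [].
have XDH : forall v, X v -> DomH v by move=> v /XO /OD [].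
have Xx : forall j, X (x j) by case=> [|j] //; rewrite hx; exact: (prjX _).1.
have Xy : forall j, X (y j) by move=> j; rewrite hy; exact: (prjX _).1.
have Omw : forall j, Omega (w' j) by move=> j; rewrite hw'; exact: (prjO _).1.
have LkP : forall j, 0 < Lk j by move=> j; rewrite /Lk addr_gt0 // mulr_gt0.
have lamL : forall j, lambda j * Lk j < 1.
  by move=> j; have := lamlt j; rewrite ltr_pdivlMr ?mul1r //; exact: LkP.
have Apos : forall j, 0 < 1 - lambda j ^+ 2 * Lk j ^+ 2.
  move=> j; have h1 := lamL j; have h2 := mulr_gt0 (lam0 j) (LkP j).
  rewrite -exprMn subr_gt0; nra.
have Ale1 : forall j, 1 - lambda j ^+ 2 * Lk j ^+ 2 <= 1.
  by move=> j; rewrite lerBlDr lerDl mulr_ge0 // sqr_ge0.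
have Bpos : forall j, 0 < 2 * lambda j * eta j * mu.
  by move=> j; rewrite !mulr_gt0.
have beta0 : forall j, 0 < beta j.
  by move=> j; rewrite /beta invr_gt0 addr_gt0 // invr_gt0.
have beta1 : forall j, beta j < 1.
  move=> j; rewrite /beta invf_lt1; last by rewrite addr_gt0 // invr_gt0.
  have := Ale1 j; rewrite -(invf_ge1 (Apos j)) => h.
  have : 0 < (2 * lambda j * eta j * mu)^-1 by rewrite invr_gt0.
  lra.
have pp0 : pp 0%N = 1 by rewrite /pp big_ord0 invr1.
have ppP : forall m, 0 < pp m.
  move=> m; rewrite /pp invr_gt0 prodr_gt0 // => i _.
  by rewrite subr_gt0.
have ppS : forall j, pp j.+1 * (1 - beta j) = pp j.
  move=> j; rewrite /pp big_ord_recr /= invfM -mulrA mulVf ?mulr1 //.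
  by rewrite gt_eqF // subr_gt0.
have D0 : 0 <= D by apply: le_trans (diam_ub Xc X0 X0); exact: enorm_ge0.
have C0 : 0 <= C.
  by apply: le_trans (supnorm_ub Xc XDH lipH (ltW LH0) X0); exact: enorm_ge0.
have step : forall z, X z -> forall j,
  dotp (x j.+1 - z) (x j.+1 - z) <= (1 - beta j) * dotp (w j - z) (w j - z)
     - 2 * lambda j * dotp (F z) (y j - z) + 2 * lambda j * eta j * (C * D).
  move=> z Xz j.
  set Gy := F (y j) + eta j *: H (y j).
  set Gw := F (w' j) + eta j *: H (w' j).
  have h1 : dotp (w j - lambda j *: Gy - x j.+1) (z - x j.+1) <= 0.
    by rewrite hx; apply: proj_vi Xcvx prjX _ _ Xz.
  have h2 : dotp (w j - lambda j *: Gw - y j) (x j.+1 - y j) <= 0.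
    by rewrite hy; apply: proj_vi Xcvx prjX _ _ (Xx j.+1).
  have [DFw DHw] := OD _ (Omw j).
  have hlip : enorm (Gw - Gy) <= Lk j * enorm (w' j - y j).
    have -> : Gw - Gy = (F (w' j) - F (y j)) + eta j *: (H (w' j) - H (y j)).
      by apply/rowP => i; rewrite /Gw /Gy !mxE; ring.
    apply: le_trans (enormD _ _) _.
    rewrite enormZ ger0_norm ?(ltW (eta0 j)) // /Lk mulrDl.
    apply: lerD; first exact: lipF (XDF _ (Xy j)).
    rewrite -mulrA ler_wpM2l ?(ltW (eta0 j)) //; exact: lipH (XDH _ (Xy j)).
  have he : enorm (w' j - y j) ^+ 2 <= dotp (w j - y j) (w j - y j).
    rewrite enorm_sq hw'; exact: proj_nonexp Omcvx prjO _ _ (XO _ (Xy j)).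
  have h3 : 2 * lambda j * dotp (Gw - Gy) (x j.+1 - y j) <=
      lambda j ^+ 2 * Lk j ^+ 2 * dotp (w j - y j) (w j - y j)
      + dotp (x j.+1 - y j) (x j.+1 - y j).
    exact: lip_core (ltW (lam0 j)) (ltW (LkP j)) (enorm_ge0 _) hlip he.
  have h4 : dotp (x j.+1 - z) (x j.+1 - z) <= dotp (w j - z) (w j - z)
      - (1 - lambda j ^+ 2 * Lk j ^+ 2) * dotp (w j - y j) (w j - y j)
      - 2 * lambda j * dotp Gy (y j - z).
    exact: step_core h1 h2 h3.
  have hm1 : 0 <= dotp (F (y j) - F z) (y j - z) := monF _ _ (XDF _ (Xy j)) (XDF _ Xz).
  have hm2 : mu * dotp (y j - z) (y j - z) <= dotp (H (y j) - H z) (y j - z).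
    by rewrite -enorm_sq; exact: smH (XDH _ (Xy j)) (XDH _ Xz).
  have hm3 : - (C * D) <= dotp (H z) (y j - z).
    have := CS (H z) (- (y j - z)); rewrite dotpNr enormN.
    have h5 : enorm (H z) * enorm (y j - z) <= C * D.
      apply: ler_pM; rewrite ?enorm_ge0 //.
        exact: supnorm_ub Xc XDH lipH (ltW LH0) Xz.
      exact: diam_ub Xc (Xy j) Xz.
    lra.
  have h5 : dotp (F z) (y j - z) + eta j * mu * dotp (y j - z) (y j - z) - eta j * (C * D)
      <= dotp Gy (y j - z).
    exact: mono_core (ltW (eta0 j)) hm1 hm2 hm3.
  have h6 : beta j * dotp (w j - z) (w j - z) <=
      (1 - lambda j ^+ 2 * Lk j ^+ 2) * dotp (w j - y j) (w j - y j)
      + 2 * lambda j * eta j * mu * dotp (y j - z) (y j - z).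
    have e6 : w j - z = (w j - y j) + (y j - z) by rewrite addrA subrK.
    rewrite e6; exact: beta_core (Apos j) (Bpos j).
  have h7 := ler_wpM2l (mulr_ge0 (ler0n _ 2) (ltW (lam0 j))) h5.
  move: h4 h6 h7.
  set A1 := dotp (x j.+1 - z) _; set W := dotp (w j - z) _.
  set Q := dotp (w j - y j) _; set P := dotp (y j - z) (y j - z).
  set T := dotp Gy _; set Fz := dotp (F z) _.
  move=> h4 h6 h7.
  nra.
have LamP : 0 < Lam.
  rewrite /Lam; have -> : k = k.-1.+1 by rewrite prednK.
  rewrite big_ord_recr /=.
  have h1 : 0 <= \sum_(i < k.-1) lambda i * eta i * pp i.+1.
    by apply: sumr_ge0 => i _; rewrite !mulr_ge0 // ltW.
  have h2 : 0 < lambda k.-1 * eta k.-1 * pp k.-1.+1 by rewrite !mulr_gt0.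
  lra.
have comb : forall z, dotp (F z) (ybar - z) =
    Lam^-1 * \sum_(j < k) lambda j * eta j * pp j.+1 * dotp (F z) (y j - z).
  move=> z; have E := @dotp_comb _ _ (F z) z (fun j => lambda j * eta j * pp j.+1) y k.
  cbv beta in E; rewrite /ybar /Lam E //; exact: lt0r_neq0.
split.
  have [z0 [Xz0 hz0]] := sol.
  apply: (@gap_ge0 _ _ _ _ _ z0) => //; rewrite comb.
  apply: mulr_ge0; first by rewrite invr_ge0 ltW.
  apply: sumr_ge0 => j _; apply: mulr_ge0; first by rewrite !mulr_ge0 // ltW.
  exact: hz0 (Xy j).
apply: gap_le => // z Xz.
pose a j := dotp (x j - z) (x j - z).
have a0 : forall j, 0 <= a j by move=> j; exact: dotp_ge0.
have aD : forall j, a j <= D ^+ 2.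
  move=> j; rewrite /a -enorm_sq ler_pXn2r ?nnegrE ?enorm_ge0 //.
  exact: diam_ub Xc (Xx j) Xz.
have Wid : forall j, dotp (w j - z) (w j - z) =
    (1 + alpha j) * a j - alpha j * a j.-1 + delta j.
  move=> j.
  have -> : w j - z = (1 + alpha j) *: (x j - z) - alpha j *: (x j.-1 - z).
    by apply/rowP => i; rewrite hw !mxE; ring.
  rewrite inert_id /delta enorm_sq.
  have -> : x j - z - (x j.-1 - z) = x j - x j.-1.
    by apply/rowP => i; rewrite !mxE; ring.
  by [].
pose Psi K := eta K * pp K * a K - eta K * pp K * alpha K * a K.-1
   + eta K * pp K * alpha K * D ^+ 2.
pose g j := 2 * lambda j * eta j * pp j.+1 * dotp (F z) (y j - z).
pose b j := eta j * pp j * delta j + 2 * (lambda j * eta j ^+ 2 * pp j.+1) * C * D.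
have stepK : forall K, Psi K.+1 <= Psi K - g K + b K.
  move=> K; have s := step z Xz K; rewrite Wid in s.
  have f1 := ler_wpM2l (mulr_ge0 (ltW (eta0 K)) (ltW (ppP K.+1))) s.
  have f2 : eta K.+1 * pp K.+1 * a K.+1 <= eta K * pp K.+1 * a K.+1.
    by rewrite ler_wpM2r // ler_wpM2r // ltW.
  have f3 : eta K.+1 * pp K.+1 * alpha K.+1 <= eta K * (pp K.+1 * (1 - beta K)) * alpha K.
    apply: le_trans (_ : eta K * pp K.+1 * alpha K.+1 <= _).
      by rewrite ler_wpM2r // ler_wpM2r // ltW.
    rewrite -!mulrA ler_wpM2l ?(ltW (eta0 K)) // ler_wpM2l ?(ltW (ppP _)) //.
  have f4 : 0 <= (eta K * (pp K.+1 * (1 - beta K)) * alpha K - eta K.+1 * pp K.+1 * alpha K.+1)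
     * (D ^+ 2 - a K).
    by apply: mulr_ge0; rewrite subr_ge0 // aD.
  move: f1 f2 f3 f4; rewrite /Psi /g /b /= -(ppS K).
  set PK := pp K.+1; set bK := beta K.
  move=> f1 f2 f3 f4.
  change (dotp (x K.+1 - z) (x K.+1 - z)) with (a K.+1) in f1. nra.
have claim : forall K, Psi K + \sum_(j < K) g j <= Psi 0%N + \sum_(j < K) b j.
  elim=> [|K IH]; first by rewrite !big_ord0.
  rewrite !big_ord_recr /=; have := stepK K; lra.
have Psi0 : Psi 0%N <= eta 0%N * D ^+ 2.
  rewrite /Psi /= pp0.
  have := aD 0%N; case/andP: al01 => h1 h2 h3.
  have h4 : 0 <= eta 0%N * (1 - alpha 0%N) * (D ^+ 2 - a 0%N).
    by rewrite !mulr_ge0 ?subr_ge0 // ltW.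
  nra.
have Psik : 0 <= Psi k.
  rewrite /Psi.
  have h1 : 0 <= eta k * pp k * a k by rewrite !mulr_ge0 // ltW.
  have h2 : 0 <= eta k * pp k * alpha k * (D ^+ 2 - a k.-1).
    by rewrite !mulr_ge0 ?subr_ge0 // ltW.
  lra.
have sumg : \sum_(j < k) g j =
    2 * \sum_(j < k) lambda j * eta j * pp j.+1 * dotp (F z) (y j - z).
  by rewrite mulr_sumr; apply: eq_bigr => j _; rewrite /g; ring.
have sumb : \sum_(j < k) b j = \sum_(j < k) eta j * pp j * delta j
    + 2 * (\sum_(j < k) lambda j * eta j ^+ 2 * pp j.+1) * C * D.
  by rewrite big_split /= -!mulr_suml -mulr_sumr.
have := claim k; rewrite sumg sumb comb.
set S := \sum_(j < k) _ * dotp _ _.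
set SD := \sum_(j < k) eta j * pp j * delta j.
set SL := \sum_(j < k) lambda j * eta j ^+ 2 * pp j.+1.
move=> hc.
rewrite (_ : (2 * Lam)^-1 * _ = Lam^-1 * ((eta 0%N * D ^+ 2 + SD + 2 * SL * C * D) / 2)); last first.
  by field; rewrite gt_eqF.
rewrite ler_pM2l ?invr_gt0 // ler_pdivlMr //; lra.
Qed.
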